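(* Let $D\in\mathbb{Z}_{\le0}$ and let $d\ge1$ be an integer coprime to $D$. Then for every $s\in\mathbb{Z}^n$ with $D\equiv\frac12qS^{-1}[s]\pmod{qd}$, the vector $$\xi=\left(\frac{\frac12qS^{-1}[s]-D}{qd},\ S^{-1}s,\ d\right)^t\in\mathbb{Q}^{n+2}$$ belongs to $L_0\!\left[-\frac Dq,\frac12\mathbb{Z}\right]$, i.e. $\phi_0[\xi]=-\frac Dq$ and $\{\phi_0(\xi,y):y\in\mathbb{Z}^{n+2}\}=\frac12\mathbb{Z}$.
   Context: $S$ is an even positive definite symmetric integral $n\times n$ matrix ($n\ge1$), $A[B]=B^tAB$, and $q$ is the least positive integer with $\frac12qS^{-1}[r]\in\mathbb{Z}$ for all $r\in\mathbb{Z}^n$. $S_0=\begin{pmatrix}0&0&1\\0&-S&0\\1&0&0\end{pmatrix}$, $\phi_0(x,y)=\frac12x^tS_0y$ on $V_0=\mathbb{Q}^{n+2}$, $\phi_0[x]=\phi_0(x,x)$, $L_0=\mathbb{Z}^{n+2}$. For $c\in\mathbb{Q}^\times$ and a fractional ideal $\mathfrak b$ of $\mathbb{Q}$, $L_0[c,\mathfrak b]=\{x\in V_0:\phi_0[x]=c,\ \phi_0(x,L_0)=\mathfrak b\}$, where $\phi_0(x,L_0)$ is the set (a fractional ideal) $\{\phi_0(x,y):y\in L_0\}$. *)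

(* Defs.v *)
From HB Require Import structures.
From mathcomp Require Import all_boot all_order all_algebra.
Set Implicit Arguments. Unset Strict Implicit. Unset Printing Implicit Defensive.
Import Order.TTheory GRing.Theory Num.Theory.
Local Open Scope ring_scope.

(* A[B] = B^t A B, for a column vector B, as a scalar *)
Definition qform (m : nat) (A : 'M[rat]_m) (r : 'cV[rat]_m) : rat :=
  (r^T *m A *m r) 0 0.

Definition intvec (m : nat) (r : 'cV[rat]_m) : Prop :=
  forall i, r i 0 \is a Num.int.

Definition even_posdef_sym_int (n : nat) (S : 'M[rat]_n) : Prop :=
  [/\ forall i j, S i j \is a Num.int,
      S^T = S,
      forall i, S i i / 2 \is a Num.int &
      forall v : 'cV[rat]_n, v != 0 -> 0 < qform S v].

Definition q_prop (n : nat) (S : 'M[rat]_n) (q : nat) : Prop :=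
  forall r : 'cV[rat]_n, intvec r -> (q%:R / 2) * qform (invmx S) r \is a Num.int.

Definition is_level (n : nat) (S : 'M[rat]_n) (q : nat) : Prop :=
  [/\ (0 < q)%N, q_prop S q & forall q', (0 < q')%N -> q_prop S q' -> (q <= q')%N].

(* S_0 = [[0,0,1],[0,-S,0],[1,0,0]] in block form with sizes 1, n, 1 *)
Definition S0 (n : nat) (S : 'M[rat]_n) : 'M[rat]_(1 + n + 1) :=
  block_mx (block_mx (0 : 'M_1) 0 0 (- S))
           (col_mx (1%:M : 'M_1) (0 : 'M_(n, 1)))
           (row_mx (1%:M : 'M_1) (0 : 'M_(1, n)))
           (0 : 'M_1).

Definition phi0 (n : nat) (S : 'M[rat]_n) (x y : 'cV[rat]_(1 + n + 1)) : rat :=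
  (1 / 2) * (x^T *m S0 S *m y) 0 0.

(* x in L_0[c, b], where the fractional ideal b is given as a predicate on Q *)
Definition in_L0 (n : nat) (S : 'M[rat]_n) (c : rat) (b : rat -> Prop)
    (x : 'cV[rat]_(1 + n + 1)) : Prop :=
  phi0 S x x = c /\
  (forall r : rat, (exists y, intvec y /\ phi0 S x y = r) <-> b r).

Definition halfZ (r : rat) : Prop := exists k : int, r = k%:~R / 2.

Definition xi_vec (n : nat) (S : 'M[rat]_n) (q d : nat) (D : int)
    (s : 'cV[rat]_n) : 'cV[rat]_(1 + n + 1) :=
  col_mx (col_mx (((q%:R / 2) * qform (invmx S) s - D%:~R) / (q * d)%:R)%:M
                 (invmx S *m s))
         (d%:R)%:M.

(* Main.v *)
Require Import Defs.
From HB Require Import structures.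
From mathcomp Require Import all_boot all_order all_algebra ring.
Import Order.TTheory GRing.Theory Num.Theory.
Local Open Scope ring_scope.
Section Aux.
Set Implicit Arguments.
Unset Strict Implicit.
Lemma qformE m (A : 'M[rat]_m) r :
  qform A r = \sum_i \sum_j r i 0 * A i j * r j 0.
Proof.
rewrite /qform mxE exchange_big; apply eq_bigr => j _.
rewrite !mxE big_distrl /=; apply eq_bigr => i _; by rewrite !mxE.
Qed.
Lemma qform_delta m (A : 'M[rat]_m) a b :
  ((delta_mx a (0:'I_1))^T *m A *m delta_mx b (0:'I_1)) 0 0 = A a b :> rat.
Proof. by rewrite trmx_delta -rowE -colE !mxE. Qed.
Lemma intvec_col m1 m2 (a : 'cV[rat]_m1) (b : 'cV[rat]_m2) :
  intvec a -> intvec b -> intvec (col_mx a b).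
Proof. by move=> ha hb i; rewrite mxE; case: split => j. Qed.
Lemma intvec_scal (x : rat) : x \is a Num.int -> intvec (x%:M : 'cV_1).
Proof. by move=> hx i; rewrite (ord1 i) mxE eqxx mulr1n. Qed.
Lemma intvec_delta m (i : 'I_m) : intvec (delta_mx i 0).
Proof. by move=> j; rewrite mxE; case: (_ && _). Qed.
Lemma intvec_add m (a b : 'cV[rat]_m) : intvec a -> intvec b -> intvec (a + b).
Proof. by move=> ha hb i; rewrite mxE; apply: rpredD. Qed.

Lemma addE m p (A B : 'M[rat]_(m, p)) i j : (A + B) i j = A i j + B i j.
Proof. by rewrite mxE. Qed.

Lemma sym_entry n (M : 'M[rat]_n) (Msym : M^T = M) i j : M j i = M i j.
Proof. by rewrite -{1}Msym mxE. Qed.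

Lemma split_sum n (M : 'M[rat]_n) (Msym : M^T = M) (s : 'cV[rat]_n) :
  \sum_(i < n) \sum_(j < n) s i 0 * M i j * s j 0 =
  \sum_(i < n) s i 0 * M i i * s i 0 +
  2 * \sum_(i < n) \sum_(j < n) (if (j < i)%N then s i 0 * M i j * s j 0 else 0).
Proof.
set F := fun i j => s i 0 * M i j * s j 0.
have e : forall i, \sum_(j < n) F i j = F i i + \sum_(j < n) (if (j < i)%N then F i j else 0)
   + \sum_(j < n) (if (i < j)%N then F i j else 0).
  move=> i; have -> : F i i = \sum_(j < n) (if j == i then F i j else 0).
    by rewrite -big_mkcond big_pred1_eq.
  rewrite -!big_split /=.
  apply: eq_bigr => j _; case: (ltngtP j i) => h.
  - by rewrite -val_eqE /= (ltn_eqF h) add0r addr0.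
  - by rewrite -val_eqE /= (gtn_eqF h) addr0 add0r.
  - by rewrite (val_inj h) eqxx !addr0.
rewrite (eq_bigr _ (fun i _ => e i)) !big_split /=.
have -> : \sum_(i < n) \sum_(j < n) (if (i < j)%N then F i j else 0) =
          \sum_(i < n) \sum_(j < n) (if (j < i)%N then F i j else 0).
  rewrite exchange_big; apply: eq_bigr => i _; apply: eq_bigr => j _.
  by case: ifP => // _; rewrite /F (sym_entry Msym i j); ring.
by rewrite /F -addrA -mulr2n mulr_natl.
Qed.

Lemma cvec n (M : 'M[rat]_n) (q : nat) (Msym : M^T = M)
  (qP : forall r, intvec r -> (q%:R/2) * qform M r \is a Num.int)
  (s : 'cV[rat]_n) (hs : intvec s) :
  exists c : 'cV[rat]_n, intvec c /\ (s^T *m c) 0 0 = (q%:R/2) * qform M s.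
Proof.
have hii : forall i, (q%:R/2) * M i i \is a Num.int.
  by move=> i; have := qP _ (intvec_delta i); rewrite /qform qform_delta.
have hij : forall i j, i != j -> q%:R * M i j \is a Num.int.
  move=> i j ij.
  have := qP _ (intvec_add (intvec_delta i) (intvec_delta j)).
  rewrite /qform !linearD /= !mulmxDl !addE !qform_delta (sym_entry Msym i j).
  have -> : q%:R / 2 * (M i i + M i j + (M i j + M j j)) =
            q%:R * M i j + (q%:R/2 * M i i + q%:R/2 * M j j) by field.
  by rewrite rpredDr // rpredD.
exists (\col_i ((q%:R/2) * M i i * s i 0 +
   \sum_(j < n) (if (j < i)%N then q%:R * M i j * s j 0 else 0))).
split.
  move=> i; rewrite mxE; apply: rpredD; first exact: rpredM.
  apply: rpred_sum => j _; case: ifP => h; last exact: rpred0.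
  apply: rpredM => //; apply: hij; apply/negP => /eqP E; move: h; by rewrite E ltnn.
rewrite qformE split_sum // mxE.
rewrite mulrDr mulrA (_ : q%:R / 2 * 2 = q%:R :> rat); last by field.
rewrite !mulr_sumr -big_split /=.
apply: eq_bigr => i _; rewrite !mxE mulrDr mulr_sumr. apply: (congr2 (fun x y => x + y)); first by ring.
rewrite mulr_sumr; apply: eq_bigr => j _; case: ifP => _; [by ring | by rewrite !mulr0].
Qed.

Lemma S0E n (S : 'M[rat]_n) (x1 x3 y1 y3 : 'cV[rat]_1) (xm ym : 'cV[rat]_n) :
  (col_mx (col_mx x1 xm) x3)^T *m S0 S *m col_mx (col_mx y1 ym) y3
  = x1^T *m y3 - xm^T *m S *m ym + x3^T *m y1.
Proof.
rewrite /S0 !tr_col_mx.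
rewrite (mul_row_block (R:=rat)) (mul_row_block (R:=rat)) !(mul_row_col (R:=rat)).
rewrite !mulmx0 !addr0 (mul_mx_row (R:=rat)) mulmx0 (add_row_mx (V:=rat)) (mul_row_col (R:=rat)).
rewrite !mulmx1 !addr0 !add0r mulmxN mulNmx; by rewrite addrC [x3^T *m y1 + _]addrC addrA.
Qed.

Lemma oppE m p (A : 'M[rat]_(m, p)) i j : (- A) i j = - A i j.
Proof. by rewrite mxE. Qed.
Lemma scaleE m p (a : rat) (A : 'M[rat]_(m, p)) i j : (a *: A) i j = a * A i j.
Proof. by rewrite mxE. Qed.
Lemma scal00 (x : rat) : (x%:M : 'M_1) 0 0 = x.
Proof. by rewrite mxE eqxx mulr1n. Qed.
Lemma intvec_scale m (x : rat) (c : 'cV[rat]_m) :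
  x \is a Num.int -> intvec c -> intvec (x *: c).
Proof. by move=> hx hc i; rewrite mxE; apply: rpredM. Qed.
Lemma intvec_u m1 m2 (y : 'cV[rat]_(m1 + m2)) : intvec y -> intvec (usubmx y).
Proof. by move=> hy i; rewrite mxE. Qed.
Lemma intvec_d m1 m2 (y : 'cV[rat]_(m1 + m2)) : intvec y -> intvec (dsubmx y).
Proof. by move=> hy i; rewrite mxE. Qed.
Lemma dot_int m (a b : 'cV[rat]_m) : intvec a -> intvec b -> (a^T *m b) 0 0 \is a Num.int.
Proof.
move=> ha hb; rewrite mxE; apply: rpred_sum => j _; rewrite mxE; exact: rpredM.
Qed.
Lemma unit_of_posdef n (S : 'M[rat]_n) :
  (forall v, v != 0 -> 0 < qform S v) -> S \in unitmx.
Proof.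
move=> Spos; rewrite unitmxE unitfE; apply/negP => /det0P [v v0 vS].
have := Spos v^T; rewrite trmx_eq0 => /(_ v0).
by rewrite /qform trmxK vS mul0mx mxE ltxx.
Qed.
End Aux.

Theorem lemma6p7 (n : nat) (S : 'M[rat]_n) (q : nat) (D : int) (d : nat)
    (s : 'cV[rat]_n) :
  (0 < n)%N ->
  even_posdef_sym_int S ->
  is_level S q ->
  D <= 0 ->
  (0 < d)%N ->
  coprime d `|D|%N ->
  intvec s ->
  (exists k : int, (q%:R / 2) * qform (invmx S) s - D%:~R = k%:~R * (q * d)%:R) ->
  in_L0 S (- (D%:~R / q%:R)) halfZ (xi_vec S q d D s).
Proof.
move=> n0 hS hq D0 d0 cop hs [k hk].
case: hS => Sint Ssym Sev Spos; case: hq => q0 qP _.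
have Su := unit_of_posdef Spos.
have MS : invmx S *m S = 1%:M := mulVmx Su.
have Msym : (invmx S)^T = invmx S by rewrite trmx_inv Ssym.
have qne : (q%:R : rat) != 0 by rewrite pnatr_eq0 -lt0n.
have dne : (d%:R : rat) != 0 by rewrite pnatr_eq0 -lt0n.
have ha : ((q%:R/2) * qform (invmx S) s - D%:~R) / (q * d)%:R = k%:~R.
  by rewrite hk mulfK // natrM mulf_neq0.
have phiE : forall y1 ym y3,
  phi0 S (col_mx (col_mx (k%:~R)%:M (invmx S *m s)) (d%:R)%:M) (col_mx (col_mx y1 ym) y3)
  = 1/2 * (k%:~R * y3 0 0 - (s^T *m ym) 0 0 + d%:R * y1 0 0).
  move=> y1 ym y3; rewrite /phi0 S0E !tr_scalar_mx !mul_scalar_mx trmx_mul Msym.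
  by rewrite -(mulmxA s^T (invmx S) S) MS mulmx1 !addE oppE !scaleE.
rewrite /in_L0 /xi_vec ha; split.
  rewrite phiE !scal00 mulmxA.
  have hD : D%:~R = q%:R / 2 * qform (invmx S) s - k%:~R * (q%:R * d%:R) :> rat.
    by rewrite -natrM -hk opprB addrC subrK.
  rewrite hD /qform. by field.
move=> r; split.
  move=> [y [hy <-]].
  rewrite -(vsubmxK y) -(vsubmxK (usubmx y)) phiE.
  have h1 := intvec_u (intvec_u hy); have h2 := intvec_d (intvec_u hy);
  have h3 := intvec_d hy.
  have : k%:~R * (dsubmx y) 0 0 - (s^T *m dsubmx (usubmx y)) 0 0 + d%:R * (usubmx (usubmx y)) 0 0
     \is a Num.int.
    apply: rpredD; first apply: rpredB; first exact: rpredM (intr_int _ _) (h3 _).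
      exact: dot_int.
    exact: rpredM (natr_int _ _) (h1 _).
  move/intrP => [z ->]; exists z; by rewrite mul1r mulrC.
move=> [m ->].
have [u [w huw]] := Bezoutz d%:Z D.
have g1 : gcdz d%:Z D = 1 by rewrite /gcdz absz_nat (eqP cop).
rewrite g1 in huw.
have huw' : u%:~R * d%:R + w%:~R * D%:~R = 1 :> rat.
  by have := congr1 (fun z : int => z%:~R : rat) huw; rewrite intrD !intrM.
have [c [hc hsc]] := cvec Msym qP hs.
exists (col_mx (col_mx (m%:~R * u%:~R)%:M ((-(m%:~R * w%:~R)) *: c))
                (-(m%:~R * w%:~R * q%:R * d%:R))%:M).
split.
  apply: intvec_col; first apply: intvec_col.
  - by apply: intvec_scal; apply: rpredM; apply: intr_int.
  - by apply: intvec_scale => //; rewrite rpredN; apply: rpredM; apply: intr_int.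
  - apply: intvec_scal; rewrite rpredN; apply: rpredM; last exact: natr_int.
    by apply: rpredM; [apply: rpredM; apply: intr_int | exact: natr_int].
rewrite phiE !scal00 -scalemxAr scaleE hsc.
have hQ : q%:R / 2 * qform (invmx S) s = D%:~R + k%:~R * (q%:R * d%:R) :> rat.
  by rewrite -natrM -hk addrC subrK.
rewrite hQ.
transitivity (m%:~R / 2 * (u%:~R * d%:R + w%:~R * D%:~R) : rat); last by rewrite huw' mulr1.
by field.
Qed.
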